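(* Under the hypotheses of the setting below (with $\mu_+(\infty)\le1$, $\mu_-(\infty)<\infty$, (A1), (A4), (A5), (A6)), let $0<\mu_0\le\mu_1$ be constants with $\mu_0\le f'\le\mu_1$ and $\mu_0\rho\le f(\rho)\le\mu_1\rho$ on $[0,\infty)$, and $\eta_0=\min\{\mu_0/\mu_1,q_0^{-1}(\mu_1/\mu_0)\}$, $\eta_1=\max\{\mu_1/\mu_0,q_1^{-1}(\mu_0/\mu_1)\}$. If $r$ is a regular equilibrium solution with $r(1)=\lambda>0$, then $$\lambda\rho^{c_1}\le r(\rho)\le\lambda\rho^{c_0}\qquad\text{for all }\rho\in(0,1],$$ where $c_0=\eta_0\mu_0/\mu_1$ and $c_1=\eta_1\mu_1/\mu_0$.
   Context: Setting: $n\ge2$; $\kappa$ continuous on $[0,\infty)$, $\kappa_\pm=\max\{\pm\kappa,0\}$, $\mu_\pm(\infty)=\int_0^\infty s\kappa_\pm(s)ds$; $f$ solves $f''+\kappa f=0$, $f(0)=0$, $f'(0)=1$. $\Phi(v_1,\dots,v_n)=\sum_i\phi(v_i)+h(v_1\cdots v_n)$, $\tau(\rho)=f(r(\rho))/f(\rho)$. An equilibrium solution with $r(1)=\lambda$ is $r\in C^1(0,1]$, twice differentiable on $(0,1)$, $r'>0$ on $(0,1]$, $r(0):=\lim_{\rho\to0^+}r(\rho)\ge0$, $r(1)=\lambda$, satisfying on $(0,1)$ $$f(\rho)\big[\phi''(r')+h''(r'\tau^{n-1})\tau^{2(n-1)}\big]r''=(n-1)\big[f'(r)\phi'(\tau)-f'(\rho)\phi'(r')\big]-(n-1)\big(f'(r)r'-f'(\rho)\tau\big)h''(r'\tau^{n-1})\,r'\tau^{2n-3};$$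 regular means $r(0)=0$. (A1) $h$ is $C^2$ and strictly convex. (A4) $\phi:(0,\infty)\to(0,\infty)$ is $C^2$ and convex. (A5) $v\phi'(v)$ is increasing. (A6) there is $t_0\ge0$ with $\phi'(t_0)=0$; $q_1(s)=\sup_{v>t_0}\phi'(v)/\phi'(sv)$ ($s\ge1$), $q_0(s)=\inf_{v>t_0/s}\phi'(v)/\phi'(sv)$ ($s\in(0,1]$) satisfy $q_1\in C^1[1,\infty)$, $q_0\in C^1(0,1]$, $q_1(s)\to0$ as $s\to\infty$, $q_0(s)\to\infty$ as $s\to0^+$, $q_1'<0$, $q_0'<0$. *)

(* Defs.v *)
From Stdlib Require Import Reals Lra.
Open Scope R_scope.

Definition deriv_within (D : R -> Prop) (f g : R -> R) (x : R) : Prop :=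
  forall eps, 0 < eps -> exists delta, 0 < delta /\
    forall h, h <> 0 -> D (x + h) -> Rabs h < delta ->
      Rabs ((f (x + h) - f x) / h - g x) < eps.

Definition cont_within (D : R -> Prop) (f : R -> R) (x : R) : Prop :=
  forall eps, 0 < eps -> exists delta, 0 < delta /\
    forall y, D y -> Rabs (y - x) < delta -> Rabs (f y - f x) < eps.

Definition lim_within (D : R -> Prop) (f : R -> R) (a l : R) : Prop :=
  forall eps, 0 < eps -> exists delta, 0 < delta /\
    forall y, D y -> y <> a -> Rabs (y - a) < delta -> Rabs (f y - l) < eps.

Definition lim_at_infty (f : R -> R) (l : R) : Prop :=
  forall eps, 0 < eps -> exists M, forall x, M <= x -> Rabs (f x - l) < eps.

Definition to_infty_at_0plus (f : R -> R) : Prop :=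
  forall A, exists delta, 0 < delta /\ forall x, 0 < x < delta -> A < f x.

Definition nonnegR (x : R) : Prop := 0 <= x.
Definition posR (x : R) : Prop := 0 < x.

Definition improper_int_0_inf (g : R -> R) (L : R) : Prop :=
  (forall T, 0 <= T -> inhabited (Riemann_integrable g 0 T)) /\
  forall eps, 0 < eps -> exists M, forall T (pr : Riemann_integrable g 0 T),
    M <= T -> Rabs (RiemannInt pr - L) < eps.

Definition pos_part (x : R) : R := Rmax x 0.
Definition neg_part (x : R) : R := Rmax (- x) 0.

Definition is_glb (E : R -> Prop) (m : R) : Prop :=
  (forall x, E x -> m <= x) /\ (forall b, (forall x, E x -> b <= x) -> b <= m).

Definition convex_on (D : R -> Prop) (g : R -> R) : Prop :=
  forall x y t, D x -> D y -> 0 <= t <= 1 ->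
    g (t * x + (1 - t) * y) <= t * g x + (1 - t) * g y.

Definition strictly_convex_on (D : R -> Prop) (g : R -> R) : Prop :=
  forall x y t, D x -> D y -> x <> y -> 0 < t < 1 ->
    g (t * x + (1 - t) * y) < t * g x + (1 - t) * g y.

Definition C2_on (D : R -> Prop) (g dg d2g : R -> R) : Prop :=
  (forall x, D x -> deriv_within D g dg x) /\
  (forall x, D x -> deriv_within D dg d2g x) /\
  (forall x, D x -> cont_within D d2g x).

Definition equilibrium_eq (n : nat) (f df phi' phi'' h'' r dr d2r : R -> R)
  (rho : R) : Prop :=
  let tau := f (r rho) / f rho in
  f rho * (phi'' (dr rho) + h'' (dr rho * tau ^ (n - 1)) * tau ^ (2 * (n - 1)))
    * d2r rho
  = INR (n - 1) * (df (r rho) * phi' tau - df rho * phi' (dr rho))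
    - INR (n - 1) * (df (r rho) * dr rho - df rho * tau)
      * h'' (dr rho * tau ^ (n - 1)) * dr rho * tau ^ (2 * n - 3).

(* Main.v *)
Require Import Defs.
From Stdlib Require Import Reals Lra Lia.
Open Scope R_scope.

Lemma dw_to_dpl (D : R -> Prop) g dg x d : 0 < d ->
  (forall y, Rabs (y - x) < d -> D y) -> deriv_within D g dg x ->
  derivable_pt_lim g x (dg x).
Proof.
  intros Hd Hdom H eps Heps.
  destruct (H eps Heps) as [del [Hdel H']].
  assert (Hm : 0 < Rmin del d) by (apply Rmin_pos; lra).
  exists (mkposreal _ Hm). intros h hn hl. simpl in hl.
  apply H'; auto.
  - apply Hdom. replace (x + h - x) with h by ring.
    eapply Rlt_le_trans; [exact hl| apply Rmin_r].
  - eapply Rlt_le_trans; [exact hl| apply Rmin_l].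
Qed.

Lemma dw_cont (D : R -> Prop) g dg x : deriv_within D g dg x -> cont_within D g x.
Proof.
  intros H eps Heps.
  destruct (H 1 Rlt_0_1) as [del [Hdel H']].
  assert (Ha : 0 < Rabs (dg x) + 1) by (pose proof (Rabs_pos (dg x)); lra).
  assert (Hm : 0 < Rmin del (eps / (Rabs (dg x) + 1))).
  { apply Rmin_pos; auto. apply Rdiv_lt_0_compat; lra. }
  exists (Rmin del (eps / (Rabs (dg x) + 1))). split; auto.
  intros y Dy Hy.
  destruct (Req_dec y x) as [->|Hne].
  - rewrite Rminus_diag, Rabs_R0. auto.
  - set (h := y - x).
    assert (hn : h <> 0) by (unfold h; lra).
    assert (Hq := H' h hn).
    replace (x + h) with y in Hq by (unfold h; ring).
    specialize (Hq Dy (Rlt_le_trans _ _ _ Hy (Rmin_l _ _))).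
    assert (Hy2 : Rabs h < eps / (Rabs (dg x) + 1)) by
      (eapply Rlt_le_trans; [exact Hy| apply Rmin_r]).
    set (q := (g y - g x) / h) in *.
    assert (Eq : g y - g x = q * h) by (unfold q; field; auto).
    rewrite Eq, Rabs_mult.
    assert (Hqb : Rabs q <= Rabs (dg x) + 1).
    { replace q with ((q - dg x) + dg x) by ring.
      eapply Rle_trans; [apply Rabs_triang|]. lra. }
    assert (Hh : Rabs h * (Rabs (dg x) + 1) < eps).
    { apply (Rmult_lt_compat_r (Rabs (dg x) + 1)) in Hy2; auto.
      unfold Rdiv in Hy2. rewrite Rmult_assoc, Rinv_l in Hy2; lra. }
    pose proof (Rabs_pos q). pose proof (Rabs_pos h).
    nra.
Qed.

Lemma dw_neg_side (D : R -> Prop) g dg x : deriv_within D g dg x -> dg x < 0 ->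
  exists d, 0 < d /\ forall h, h <> 0 -> D (x + h) -> Rabs h < d ->
    (g (x + h) - g x) / h < 0.
Proof.
  intros H Hn. destruct (H (- dg x)) as [d [Hd H']]; [lra|].
  exists d; split; auto. intros h hn Dh hl.
  specialize (H' h hn Dh hl). apply Rabs_def2 in H'. lra.
Qed.

Lemma quot_neg_pos a b h : h > 0 -> (a - b) / h < 0 -> a < b.
Proof.
  intros Hh Hq. assert (E : a - b = (a - b) / h * h) by (field; lra).
  assert ((a - b) / h * h < 0) by nra. lra.
Qed.

Lemma quot_neg_neg a b h : h < 0 -> (a - b) / h < 0 -> a > b.
Proof.
  intros Hh Hq. assert (E : a - b = (a - b) / h * h) by (field; lra).
  assert ((a - b) / h * h > 0) by nra. lra.
Qed.

Lemma trap (g g' : R -> R) (a b k : R) :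
  (forall x, a < x < b -> derivable_pt_lim g x (g' x)) ->
  (forall x, a < x < b -> g x < k -> 0 < g' x) ->
  forall x y, a < x -> x <= y -> y < b -> g y < k -> g x < k.
Proof.
  intros Hd Hs x y ax xy yb gy.
  destruct (Rlt_or_le (g x) k) as [|gx]; [auto|exfalso].
  set (E := fun z => x <= z <= y /\ k <= g z).
  assert (HB : bound E) by (exists y; intros z [[_ ?] _]; auto).
  assert (HE : exists z, E z) by (exists x; split; lra).
  destruct (completeness E HB HE) as [s [Hub Hlub]].
  assert (xs : x <= s) by (apply Hub; split; lra).
  assert (sy : s <= y) by (apply Hlub; intros z [[_ ?] _]; auto).
  assert (ks : k <= g s).
  { destruct (Rlt_or_le (g s) k) as [gs|]; [exfalso|auto].
    assert (Hc : continuity_pt g s).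
    { apply derivable_continuous_pt. exists (g' s). apply Hd. lra. }
    destruct (Hc (k - g s)) as [alp [Halp Hc']]; [lra|].
    assert (s <= s - alp); [|lra].
    apply Hlub. intros z [Hz1 Hz2].
    destruct (Rle_or_lt z (s - alp)) as [|Hlt]; auto. exfalso.
    assert (zs : z <= s) by (apply Hub; split; auto).
    destruct (Req_dec z s) as [->|Hne]; [lra|].
    assert (Hd2 : R_dist (g z) (g s) < k - g s).
    { apply Hc'. split.
      - split; [exact I| auto].
      - simpl. unfold R_dist. rewrite Rabs_left; lra. }
    unfold R_dist in Hd2. apply Rabs_def2 in Hd2. lra. }
  assert (sy' : s < y) by (destruct sy as [|E']; auto; subst; lra).
  destruct (MVT_cor2 g g' s y sy') as [c [Heq Hc]].
  { intros c Hc. apply Hd. lra. }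
  assert (gc : g c < k).
  { destruct (Rlt_or_le (g c) k) as [|Hk]; auto. exfalso.
    assert (c <= s) by (apply Hub; split; [lra|auto]). lra. }
  specialize (Hs c ltac:(lra) gc). nra.
Qed.

Lemma mono_le (g g' : R -> R) a b :
  (forall x, a < x < b -> derivable_pt_lim g x (g' x)) ->
  (forall x, a < x < b -> 0 <= g' x) ->
  forall x y, a < x -> x <= y -> y < b -> g x <= g y.
Proof.
  intros Hd Hs x y ax [xy|<-] yb; [|lra].
  destruct (MVT_cor2 g g' x y xy) as [c [Heq Hc]].
  { intros c Hc. apply Hd. lra. }
  specialize (Hs c ltac:(lra)). nra.
Qed.

Lemma mono_end (g g' : R -> R) :
  (forall x, 0 < x < 1 -> derivable_pt_lim g x (g' x)) ->
  (forall x, 0 < x < 1 -> 0 <= g' x) ->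
  limit1_in g (fun y => 0 < y <= 1) (g 1) 1 ->
  forall x, 0 < x <= 1 -> g x <= g 1.
Proof.
  intros Hd Hs Hl x [x0 [x1| ->]]; [|lra].
  destruct (Rle_or_lt (g x) (g 1)) as [|Hc]; auto. exfalso.
  destruct (Hl (g x - g 1)) as [alp [Halp H']]; [lra|].
  set (y := Rmax x (1 - alp / 2)).
  assert (y1 : y < 1) by (unfold y; apply Rmax_lub_lt; lra).
  assert (xy : x <= y) by (unfold y; apply Rmax_l).
  assert (Hy : 1 - alp / 2 <= y) by (unfold y; apply Rmax_r).
  assert (H2 : R_dist (g y) (g 1) < g x - g 1).
  { apply H'. split; [lra|]. simpl. unfold R_dist. rewrite Rabs_left; lra. }
  unfold R_dist in H2. apply Rabs_def2 in H2.
  pose proof (mono_le g g' 0 1 Hd Hs x y x0 xy y1). lra.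
Qed.

Lemma convex_slope_l g dg x y : 0 < x < y -> convex_on posR g ->
  deriv_within posR g dg x -> dg x <= (g y - g x) / (y - x).
Proof.
  intros [x0 xy] Hc Hd.
  set (S := (g y - g x) / (y - x)).
  destruct (Rle_or_lt (dg x) S) as [|Hlt]; auto. exfalso.
  destruct (Hd (dg x - S)) as [del [Hdel H']]; [lra|].
  set (h := Rmin (del / 2) (y - x)).
  assert (h0 : 0 < h) by (unfold h; apply Rmin_pos; lra).
  assert (h1 : h <= y - x) by apply Rmin_r.
  assert (h2 : h <= del / 2) by apply Rmin_l.
  specialize (H' h ltac:(lra) ltac:(unfold posR; lra)
    ltac:(rewrite Rabs_right; lra)).
  apply Rabs_def2 in H'.
  set (t := h / (y - x)).
  assert (t0 : 0 <= t <= 1).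
  { unfold t; split. unfold Rdiv; apply Rmult_le_pos; [lra| left; apply Rinv_0_lt_compat; lra].
    apply (Rmult_le_reg_r (y - x)); [lra|]. field_simplify; lra. }
  specialize (Hc y x t ltac:(unfold posR; lra) ltac:(unfold posR; lra) t0).
  replace (t * y + (1 - t) * x) with (x + h) in Hc by (unfold t; field; lra).
  assert (Hq : (g (x + h) - g x) / h <= S).
  { unfold S. apply (Rmult_le_reg_r h); [lra|].
    replace ((g (x + h) - g x) / h * h) with (g (x + h) - g x) by (field; lra).
    replace ((g y - g x) / (y - x) * h) with (t * (g y - g x)) by (unfold t; field; lra).
    lra. }
  lra.
Qed.

Lemma convex_slope_r g dg x y : 0 < x < y -> convex_on posR g ->
  deriv_within posR g dg y -> (g y - g x) / (y - x) <= dg y.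
Proof.
  intros [x0 xy] Hc Hd.
  set (S := (g y - g x) / (y - x)).
  destruct (Rle_or_lt S (dg y)) as [|Hlt]; auto. exfalso.
  destruct (Hd (S - dg y)) as [del [Hdel H']]; [lra|].
  set (k := Rmin (del / 2) (y - x)).
  assert (h0 : 0 < k) by (unfold k; apply Rmin_pos; lra).
  assert (h1 : k <= y - x) by apply Rmin_r.
  assert (h2 : k <= del / 2) by apply Rmin_l.
  specialize (H' (- k) ltac:(lra) ltac:(unfold posR; lra)
    ltac:(rewrite Rabs_left; lra)).
  apply Rabs_def2 in H'.
  set (t := k / (y - x)).
  assert (t0 : 0 <= t <= 1).
  { unfold t; split. unfold Rdiv; apply Rmult_le_pos; [lra| left; apply Rinv_0_lt_compat; lra].
    apply (Rmult_le_reg_r (y - x)); [lra|]. field_simplify; lra. }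
  specialize (Hc x y t ltac:(unfold posR; lra) ltac:(unfold posR; lra) t0).
  replace (t * x + (1 - t) * y) with (y + - k) in Hc by (unfold t; field; lra).
  assert (Hq : S <= (g (y + - k) - g y) / - k).
  { unfold S. apply (Rmult_le_reg_r k); [lra|].
    replace ((g (y + - k) - g y) / - k * k) with (g y - g (y + - k)) by (field; lra).
    replace ((g y - g x) / (y - x) * k) with (t * (g y - g x)) by (unfold t; field; lra).
    lra. }
  lra.
Qed.

Lemma convex_d2 g dg d2g :
  (forall x, posR x -> deriv_within posR g dg x) ->
  (forall x, posR x -> deriv_within posR dg d2g x) ->
  convex_on posR g -> forall x, 0 < x -> 0 <= d2g x.
Proof.
  intros H1 H2 Hc x x0.
  assert (Hm : forall a b, 0 < a < b -> dg a <= dg b).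
  { intros a b Hab.
    pose proof (convex_slope_l g dg a b Hab Hc (H1 a ltac:(unfold posR; lra))).
    pose proof (convex_slope_r g dg a b Hab Hc (H1 b ltac:(unfold posR; lra))).
    lra. }
  destruct (Rle_or_lt 0 (d2g x)) as [|Hn]; auto. exfalso.
  destruct (dw_neg_side _ _ _ _ (H2 x x0) Hn) as [d [Hd H']].
  set (h := Rmin (d / 2) x).
  assert (h0 : 0 < h) by (unfold h; apply Rmin_pos; lra).
  assert (h2 : h <= d / 2) by apply Rmin_l.
  specialize (H' h ltac:(lra) ltac:(unfold posR; lra) ltac:(rewrite Rabs_right; lra)).
  apply quot_neg_pos in H'; auto.
  specialize (Hm x (x + h) ltac:(lra)). lra.
Qed.

Lemma strict_convex_convex g : strictly_convex_on posR g -> convex_on posR g.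
Proof.
  intros H x y t Dx Dy [t0 t1].
  destruct (Req_dec x y) as [->|Hne].
  - replace (t * y + (1 - t) * y) with y by ring. lra.
  - destruct (Req_dec t 0) as [E0|N0].
    + subst t. replace (0 * x + (1 - 0) * y) with y by ring. lra.
    + destruct (Req_dec t 1) as [E1|N1].
      * subst t. replace (1 * x + (1 - 1) * y) with x by ring. lra.
      * left. apply H; auto; lra.
Qed.

Lemma T1U mu0 mu1 t0 (dphi : R -> R) a b tau D eta1 :
  0 < mu0 -> mu0 <= mu1 -> mu0 <= a <= mu1 -> mu0 <= b <= mu1 ->
  0 < tau -> 0 < D -> mu1 / mu0 <= eta1 -> eta1 * tau < D -> 0 <= t0 ->
  (forall v, 0 < v -> t0 < v -> 0 < dphi v) ->
  (forall v, 0 < v -> v <= t0 -> dphi v <= 0) ->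
  (forall v w, 0 < v -> v < w -> v * dphi v < w * dphi w) ->
  (t0 < tau -> dphi tau / dphi D < mu0 / mu1) ->
  a * dphi tau - b * dphi D < 0.
Proof.
  intros m0 m01 Ha Hb tp Dp He HD Ht Fp Fn F1 Q.
  assert (He1 : mu1 <= eta1 * mu0).
  { apply (Rmult_le_compat_r mu0) in He; [|lra].
    unfold Rdiv in He. rewrite Rmult_assoc, Rinv_l in He; lra. }
  assert (Hmd : mu1 * tau < mu0 * D) by nra.
  assert (tD : tau < D) by nra.
  destruct (Rlt_or_le t0 tau) as [Htt|Htt].
  - assert (dD : 0 < dphi D) by (apply Fp; lra).
    specialize (Q Htt).
    assert (Q2 : mu1 * dphi tau < mu0 * dphi D).
    { apply (Rmult_lt_compat_r (mu1 * dphi D)) in Q; [|nra].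
      replace (dphi tau / dphi D * (mu1 * dphi D)) with (mu1 * dphi tau) in Q by (field; lra).
      replace (mu0 / mu1 * (mu1 * dphi D)) with (mu0 * dphi D) in Q by (field; lra).
      lra. }
    destruct (Rle_or_lt 0 (dphi tau)); nra.
  - assert (dt : dphi tau <= 0) by (apply Fn; lra).
    destruct (Rlt_or_le t0 D) as [HtD|HtD].
    + assert (dD : 0 < dphi D) by (apply Fp; lra). nra.
    + assert (dD : dphi D <= 0) by (apply Fn; lra).
      specialize (F1 tau D tp tD).
      assert (K : mu1 * (D * - dphi D) < mu1 * (tau * - dphi tau)) by nra.
      assert (K2 : mu1 * tau * - dphi tau <= mu0 * D * - dphi tau) by nra.
      assert (K3 : mu1 * - dphi D < mu0 * - dphi tau) by nra.
      nra.
Qed.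

Lemma T1L mu0 mu1 t0 (dphi : R -> R) a b tau D eta0 :
  0 < mu0 -> mu0 <= mu1 -> mu0 <= a <= mu1 -> mu0 <= b <= mu1 ->
  0 < tau -> 0 < D -> eta0 <= mu0 / mu1 -> D < eta0 * tau -> 0 <= t0 ->
  (forall v, 0 < v -> t0 < v -> 0 < dphi v) ->
  (forall v, 0 < v -> v <= t0 -> dphi v <= 0) ->
  (forall v w, 0 < v -> v < w -> v * dphi v < w * dphi w) ->
  (t0 < D -> mu1 / mu0 < dphi tau / dphi D) ->
  0 < a * dphi tau - b * dphi D.
Proof.
  intros m0 m01 Ha Hb tp Dp He HD Ht Fp Fn F1 Q.
  assert (m1 : 0 < mu1) by lra.
  assert (He1 : eta0 * mu1 <= mu0).
  { apply (Rmult_le_compat_r mu1) in He; [|lra].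
    unfold Rdiv in He. rewrite Rmult_assoc, Rinv_l in He; lra. }
  assert (Hmd : mu1 * D < mu0 * tau) by nra.
  assert (tD : D < tau) by nra.
  destruct (Rlt_or_le t0 D) as [HtD|HtD].
  - assert (dD : 0 < dphi D) by (apply Fp; lra).
    specialize (Q HtD).
    assert (Q2 : mu1 * dphi D < mu0 * dphi tau).
    { apply (Rmult_lt_compat_r (mu0 * dphi D)) in Q; [|nra].
      replace (dphi tau / dphi D * (mu0 * dphi D)) with (mu0 * dphi tau) in Q by (field; lra).
      replace (mu1 / mu0 * (mu0 * dphi D)) with (mu1 * dphi D) in Q by (field; lra).
      lra. }
    assert (dt : 0 < dphi tau) by nra.
    assert (mu0 * dphi tau <= a * dphi tau) by nra.
    assert (b * dphi D <= mu1 * dphi D) by nra.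
    lra.
  - assert (dD : dphi D <= 0) by (apply Fn; lra).
    destruct (Rlt_or_le t0 tau) as [Htt|Htt].
    + assert (dt : 0 < dphi tau) by (apply Fp; lra). nra.
    + assert (dt : dphi tau <= 0) by (apply Fn; lra).
      specialize (F1 D tau Dp tD).
      assert (K : mu1 * (tau * - dphi tau) < mu1 * (D * - dphi D)) by nra.
      assert (K2 : mu1 * D * - dphi D <= mu0 * tau * - dphi D) by nra.
      assert (K3 : mu1 * - dphi tau < mu0 * - dphi D) by nra.
      nra.
Qed.

Lemma eq_sign Fr A d2 N t1 t2 Hh D tp :
  0 < Fr -> 0 <= A -> 0 < N -> 0 <= Hh -> 0 < D -> 0 < tp ->
  Fr * A * d2 = N * t1 - N * t2 * Hh * D * tp ->
  (t1 < 0 -> 0 < t2 -> d2 < 0) /\ (0 < t1 -> t2 < 0 -> 0 < d2).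
Proof.
  intros F Ap Np Hp Dp tpp E. split; intros H1 H2.
  - assert (R1 : N * t1 < 0) by nra.
    assert (R2 : 0 <= N * t2 * Hh * D * tp).
    { repeat apply Rmult_le_pos; lra. }
    destruct (Rlt_or_le d2 0) as [|Hd]; auto.
    assert (0 <= Fr * A * d2) by (repeat apply Rmult_le_pos; lra). lra.
  - assert (R1 : 0 < N * t1) by nra.
    assert (R2 : N * t2 * Hh * D * tp <= 0).
    { replace (N * t2 * Hh * D * tp) with (- (N * (- t2) * Hh * D * tp)) by ring.
      assert (0 <= N * (- t2) * Hh * D * tp) by (repeat apply Rmult_le_pos; lra). lra. }
    destruct (Rlt_or_le 0 d2) as [|Hd]; auto.
    assert (0 <= Fr * A * (- d2)) by (repeat apply Rmult_le_pos; lra). nra.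
Qed.

Lemma Rpower_1_base y : Rpower 1 y = 1.
Proof. unfold Rpower. rewrite ln_1, Rmult_0_r. apply exp_0. Qed.

Lemma pow_mono (u du : R -> R) c :
  (forall z, 0 < z < 1 -> derivable_pt_lim u z (du z)) ->
  (forall z, 0 < z < 1 -> c * u z <= z * du z) ->
  cont_within (fun y => 0 < y <= 1) u 1 ->
  forall x, 0 < x <= 1 -> u x * Rpower x (- c) <= u 1.
Proof.
  intros Hd Hs Hc x Hx.
  set (g := fun z => u z * Rpower z (- c)).
  set (g' := fun z => du z * Rpower z (- c) + u z * (- c * Rpower z (- c - 1))).
  assert (E1 : g 1 = u 1) by (unfold g; rewrite Rpower_1_base; ring).
  rewrite <- E1. change (g x <= g 1).
  apply (mono_end g g'); auto.
  - intros z Hz. unfold g, g'.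
    apply (derivable_pt_lim_mult u (fun z => Rpower z (- c))); auto.
    apply derivable_pt_lim_power. lra.
  - intros z Hz. unfold g'.
    assert (E : Rpower z (- c - 1) = Rpower z (- c) * / z).
    { unfold Rminus. rewrite Rpower_plus, (Rpower_Ropp z 1), Rpower_1; lra. }
    rewrite E.
    assert (Hp : 0 < Rpower z (- c)) by (unfold Rpower; apply exp_pos).
    assert (Hzi : 0 < / z) by (apply Rinv_0_lt_compat; lra).
    replace (du z * Rpower z (- c) + u z * (- c * (Rpower z (- c) * / z)))
      with (Rpower z (- c) * / z * (z * du z - c * u z)) by (field; lra).
    apply Rmult_le_pos; [apply Rmult_le_pos; lra|]. specialize (Hs z Hz). lra.
  - unfold g. apply (limit_mul u (fun z => Rpower z (- c))).
    + intros eps Heps. destruct (Hc eps Heps) as [d [Hd0 Hd1]].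
      exists d. split; [lra|]. intros y [Dy Hy]. simpl in *. unfold R_dist in *.
      apply Hd1; auto.
    + assert (Hcp : continuity_pt (fun z => Rpower z (- c)) 1).
      { apply derivable_continuous_pt. eexists. apply derivable_pt_lim_power. lra. }
      intros eps Heps. destruct (Hcp eps Heps) as [d [Hd0 Hd1]].
      exists d. split; auto. intros y [Dy Hy].
      destruct (Req_dec y 1) as [->|Hne].
      * simpl. unfold R_dist. rewrite Rminus_diag, Rabs_R0. lra.
      * apply Hd1. split; auto. split; [exact I| auto].
Qed.

Lemma blow_ineq T dr d2r f t2 P K mu1 z :
  0 < T -> dr = P * T -> 0 < P -> d2r < 0 -> 0 < f -> f <= mu1 * z -> 0 < z ->
  T * K * mu1 * P <= t2 -> 0 < K -> 0 < mu1 ->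
  (d2r * T - (t2 / f) * dr) / Rsqr T <= - K * P ^ 2 / z.
Proof.
  intros HT Hdr HP Hd2 Hf Hfz Hz Ht2 HK Hm.
  rewrite Hdr. unfold Rsqr.
  replace ((d2r * T - t2 / f * (P * T)) / (T * T)) with (d2r / T - (t2 / T) * (P / f))
    by (field; lra).
  assert (A1 : d2r / T < 0).
  { unfold Rdiv. assert (0 < / T) by (apply Rinv_0_lt_compat; lra). nra. }
  assert (A2 : K * mu1 * P <= t2 / T).
  { apply (Rmult_le_reg_r T); auto. replace (t2 / T * T) with t2 by (field; lra). lra. }
  assert (A3 : P / (mu1 * z) <= P / f).
  { unfold Rdiv. apply Rmult_le_compat_l; [lra|]. apply Rinv_le_contravar; auto. }
  assert (A4 : K * P ^ 2 / z = (K * mu1 * P) * (P / (mu1 * z))) by (field; lra).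
  assert (A5 : 0 <= P / (mu1 * z)).
  { unfold Rdiv. apply Rmult_le_pos; [lra|]. left. apply Rinv_0_lt_compat. nra. }
  assert (A6 : (K * mu1 * P) * (P / (mu1 * z)) <= (t2 / T) * (P / f)).
  { apply Rmult_le_compat; auto. assert (0 < K * mu1 * P) by (repeat apply Rmult_lt_0_compat; lra). lra. }
  replace (- K * P ^ 2 / z) with (- (K * P ^ 2 / z)) by (field; lra). lra.
Qed.
Theorem corollary4p4
  (n : nat) (kappa f df : R -> R)
  (phi dphi d2phi h dh d2h : R -> R) (t0 : R) (q0 dq0 q1 dq1 : R -> R)
  (mu0 mu1 : R) (r dr d2r : R -> R) (lambda : R)
  (* setting *)
  (Hn : (2 <= n)%nat)
  (Hkappa : forall x, 0 <= x -> cont_within nonnegR kappa x)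
  (Hmuplus : exists L, improper_int_0_inf (fun s => s * pos_part (kappa s)) L
                       /\ L <= 1)
  (Hmuminus : exists L, improper_int_0_inf (fun s => s * neg_part (kappa s)) L)
  (Hf1 : forall x, 0 <= x -> deriv_within nonnegR f df x)
  (Hf2 : forall x, 0 <= x -> deriv_within nonnegR df (fun s => - kappa s * f s) x)
  (Hf0 : f 0 = 0) (Hdf0 : df 0 = 1)
  (* (A1) *)
  (HhC2 : C2_on posR h dh d2h)
  (Hhconv : strictly_convex_on posR h)
  (* (A4) *)
  (HphiC2 : C2_on posR phi dphi d2phi)
  (Hphipos : forall v, 0 < v -> 0 < phi v)
  (Hphiconv : convex_on posR phi)
  (* (A5) *)
  (HA5 : forall v w, 0 < v -> v < w -> v * dphi v < w * dphi w)
  (* (A6) *)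
  (Ht0 : 0 <= t0)
  (Hdphit0 : lim_within posR dphi t0 0 /\ (0 < t0 -> dphi t0 = 0))
  (Hq1 : forall s, 1 <= s ->
     is_lub (fun y => exists v, t0 < v /\ y = dphi v / dphi (s * v)) (q1 s))
  (Hq0 : forall s, 0 < s <= 1 ->
     is_glb (fun y => exists v, t0 / s < v /\ y = dphi v / dphi (s * v)) (q0 s))
  (Hq1C1 : forall s, 1 <= s ->
     deriv_within (fun x => 1 <= x) q1 dq1 s /\
     cont_within (fun x => 1 <= x) dq1 s /\ dq1 s < 0)
  (Hq0C1 : forall s, 0 < s <= 1 ->
     deriv_within (fun x => 0 < x <= 1) q0 dq0 s /\
     cont_within (fun x => 0 < x <= 1) dq0 s /\ dq0 s < 0)
  (Hq1lim : lim_at_infty q1 0)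
  (Hq0lim : to_infty_at_0plus q0)
  (* constants mu0, mu1 *)
  (Hmu0 : 0 < mu0) (Hmu01 : mu0 <= mu1)
  (Hdfb : forall x, 0 <= x -> mu0 <= df x <= mu1)
  (Hfb : forall x, 0 <= x -> mu0 * x <= f x <= mu1 * x)
  (* r is a regular equilibrium solution with r(1) = lambda > 0 *)
  (Hr1 : forall x, 0 < x <= 1 ->
     deriv_within (fun y => 0 < y <= 1) r dr x /\
     cont_within (fun y => 0 < y <= 1) dr x /\ 0 < dr x)
  (Hr2 : forall x, 0 < x < 1 -> deriv_within (fun y => 0 < y < 1) dr d2r x)
  (Hreg : lim_within posR r 0 0)
  (Hrl : r 1 = lambda) (Hlambda : 0 < lambda)
  (Heq : forall rho, 0 < rho < 1 ->
     equilibrium_eq n f df dphi d2phi d2h r dr d2r rho) :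
  (* s0 = q0^{-1}(mu1/mu0), s1 = q1^{-1}(mu0/mu1) *)
  forall s0 s1, 0 < s0 <= 1 -> q0 s0 = mu1 / mu0 ->
    1 <= s1 -> q1 s1 = mu0 / mu1 ->
  let eta0 := Rmin (mu0 / mu1) s0 in
  let eta1 := Rmax (mu1 / mu0) s1 in
  let c0 := eta0 * mu0 / mu1 in
  let c1 := eta1 * mu1 / mu0 in
  forall rho, 0 < rho <= 1 ->
    lambda * Rpower rho c1 <= r rho <= lambda * Rpower rho c0.
Proof.
  intros s0 s1 Hs0 Hq0s0 Hs1 Hq1s1 eta0 eta1 c0 c1.
  assert (m1 : 0 < mu1) by lra.
  assert (HN : 0 < INR (n - 1)) by (apply lt_0_INR; lia).
  assert (He1a : mu1 / mu0 <= eta1) by apply Rmax_l.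
  assert (He1b : s1 <= eta1) by apply Rmax_r.
  assert (He0a : eta0 <= mu0 / mu1) by apply Rmin_l.
  assert (He0b : eta0 <= s0) by apply Rmin_r.
  assert (Hmm1 : 1 <= mu1 / mu0).
  { apply (Rmult_le_reg_r mu0); auto. unfold Rdiv. rewrite Rmult_assoc, Rinv_l; lra. }
  assert (He0p : 0 < eta0).
  { unfold eta0. apply Rmin_pos; [|lra]. apply Rdiv_lt_0_compat; lra. }
  assert (Df : forall x, 0 < x -> derivable_pt_lim f x (df x)).
  { intros x hx. apply (dw_to_dpl nonnegR f df x x hx).
    - intros y Hy. unfold nonnegR. apply Rabs_def2 in Hy. lra.
    - apply Hf1; lra. }
  assert (Dr : forall x, 0 < x < 1 -> derivable_pt_lim r x (dr x)).
  { intros x hx. apply (dw_to_dpl (fun y => 0 < y <= 1) r dr x (Rmin x (1 - x))).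
    - apply Rmin_pos; lra.
    - intros y Hy. apply Rabs_def2 in Hy.
      pose proof (Rmin_l x (1 - x)). pose proof (Rmin_r x (1 - x)). lra.
    - apply Hr1; lra. }
  assert (Ddr : forall x, 0 < x < 1 -> derivable_pt_lim dr x (d2r x)).
  { intros x hx. apply (dw_to_dpl (fun y => 0 < y < 1) dr d2r x (Rmin x (1 - x))).
    - apply Rmin_pos; lra.
    - intros y Hy. apply Rabs_def2 in Hy.
      pose proof (Rmin_l x (1 - x)). pose proof (Rmin_r x (1 - x)). lra.
    - apply Hr2; lra. }
  assert (drp : forall x, 0 < x < 1 -> 0 < dr x).
  { intros x hx. apply Hr1; lra. }
  assert (Fp : forall v, 0 < v -> t0 < v -> 0 < dphi v).
  { destruct (Rlt_or_le 0 t0) as [t0p|t0z].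
    - intros v vp tv. pose proof (HA5 t0 v t0p tv). rewrite (proj2 Hdphit0 t0p) in H. nra.
    - assert (t00 : t0 = 0) by lra.
      assert (Hnn : forall u, 0 < u -> 0 <= u * dphi u).
      { intros u up. destruct (Rle_or_lt 0 (u * dphi u)) as [|Hlt]; auto. exfalso.
        destruct (proj1 Hdphit0 1 Rlt_0_1) as [alp [Halp H']].
        set (w := Rmin (Rmin (alp / 2) (u / 2)) (- (u * dphi u) / 2)).
        assert (w1 : w <= Rmin (alp / 2) (u / 2)) by apply Rmin_l.
        assert (w2 : w <= - (u * dphi u) / 2) by apply Rmin_r.
        assert (w3 : Rmin (alp / 2) (u / 2) <= alp / 2) by apply Rmin_l.
        assert (w4 : Rmin (alp / 2) (u / 2) <= u / 2) by apply Rmin_r.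
        assert (w0 : 0 < w).
        { unfold w. apply Rmin_pos; [apply Rmin_pos|]; lra. }
        assert (Hw : Rabs (dphi w - 0) < 1).
        { apply H'; [unfold posR; lra| lra |]. rewrite t00, Rminus_0_r, Rabs_right; lra. }
        rewrite Rminus_0_r in Hw. apply Rabs_def2 in Hw.
        pose proof (HA5 w u w0 ltac:(lra)). nra. }
      intros v vp tv. pose proof (HA5 (v / 2) v ltac:(lra) ltac:(lra)).
      pose proof (Hnn (v / 2) ltac:(lra)). nra. }
  assert (Fn : forall v, 0 < v -> v <= t0 -> dphi v <= 0).
  { intros v vp vt. assert (t0p : 0 < t0) by lra.
    destruct vt as [vt| ->].
    - pose proof (HA5 v t0 vp vt). rewrite (proj2 Hdphit0 t0p) in H. nra.
    - rewrite (proj2 Hdphit0 t0p). lra. }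
  assert (Q1s : forall s, s1 < s -> q1 s < q1 s1).
  { intros s Hs. destruct (Hq1C1 s1 Hs1) as [Hd1 [_ Hneg]].
    destruct (dw_neg_side _ _ _ _ Hd1 Hneg) as [d [Hd H']].
    set (hh := Rmin (d / 2) ((s - s1) / 2)).
    assert (h1 : hh <= d / 2) by apply Rmin_l.
    assert (h2 : hh <= (s - s1) / 2) by apply Rmin_r.
    assert (h0 : 0 < hh) by (unfold hh; apply Rmin_pos; lra).
    specialize (H' hh ltac:(lra) ltac:(simpl; lra) ltac:(rewrite Rabs_right; lra)).
    apply quot_neg_pos in H'; auto.
    destruct (MVT_cor2 q1 dq1 (s1 + hh) s ltac:(lra)) as [c [Hmv Hc]].
    { intros c Hc. apply (dw_to_dpl (fun x => 1 <= x) q1 dq1 c (c - 1)); [lra| |].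
      - intros y Hy. apply Rabs_def2 in Hy. lra.
      - apply Hq1C1; lra. }
    destruct (Hq1C1 c ltac:(lra)) as [_ [_ Hn2]]. nra. }
  assert (Q0s : forall s, 0 < s < s0 -> q0 s0 < q0 s).
  { intros s Hs. destruct (Hq0C1 s0 Hs0) as [Hd1 [_ Hneg]].
    destruct (dw_neg_side _ _ _ _ Hd1 Hneg) as [d [Hd H']].
    set (hh := Rmin (d / 2) ((s0 - s) / 2)).
    assert (h1 : hh <= d / 2) by apply Rmin_l.
    assert (h2 : hh <= (s0 - s) / 2) by apply Rmin_r.
    assert (h0 : 0 < hh) by (unfold hh; apply Rmin_pos; lra).
    specialize (H' (- hh) ltac:(lra) ltac:(simpl; lra) ltac:(rewrite Rabs_left; lra)).
    apply quot_neg_neg in H'; [|lra].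
    destruct (MVT_cor2 q0 dq0 s (s0 + - hh) ltac:(lra)) as [c [Hmv Hc]].
    { intros c Hc. apply (dw_to_dpl (fun x => 0 < x <= 1) q0 dq0 c (Rmin c (1 - c))).
      - apply Rmin_pos; lra.
      - intros y Hy. apply Rabs_def2 in Hy.
        pose proof (Rmin_l c (1 - c)). pose proof (Rmin_r c (1 - c)). lra.
      - apply Hq0C1; lra. }
    destruct (Hq0C1 c ltac:(lra)) as [_ [_ Hn2]]. nra. }
  assert (Q1 : forall tau D, 0 < tau -> t0 < tau -> s1 < D / tau ->
            dphi tau / dphi D < mu0 / mu1).
  { intros tau D tp tt Hs.
    destruct (Hq1 (D / tau) ltac:(lra)) as [Hub _].
    assert (Hin : exists v, t0 < v /\ dphi tau / dphi D = dphi v / dphi (D / tau * v)).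
    { exists tau. split; auto. replace (D / tau * tau) with D by (field; lra). auto. }
    pose proof (Hub _ Hin). pose proof (Q1s _ Hs). lra. }
  assert (Q0 : forall tau D, 0 < tau -> 0 < D -> t0 < D -> D / tau < s0 ->
            mu1 / mu0 < dphi tau / dphi D).
  { intros tau D tp Dp tD Hs.
    assert (sp : 0 < D / tau) by (apply Rdiv_lt_0_compat; lra).
    destruct (Hq0 (D / tau) ltac:(lra)) as [Hlb _].
    assert (Hin : exists v, t0 / (D / tau) < v /\
               dphi tau / dphi D = dphi v / dphi (D / tau * v)).
    { exists tau. split.
      - replace (t0 / (D / tau)) with (t0 * tau / D) by (field; lra).
        apply (Rmult_lt_reg_r D); [lra|].
        replace (t0 * tau / D * D) with (t0 * tau) by (field; lra). nra.
      - replace (D / tau * tau) with D by (field; lra). auto. }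
    pose proof (Hlb _ Hin). pose proof (Q0s (D / tau) ltac:(lra)). lra. }
  assert (P2 : forall x, 0 < x -> 0 <= d2phi x).
  { destruct HphiC2 as [A1 [A2 _]]. exact (convex_d2 phi dphi d2phi A1 A2 Hphiconv). }
  assert (H2 : forall x, 0 < x -> 0 <= d2h x).
  { destruct HhC2 as [A1 [A2 _]].
    exact (convex_d2 h dh d2h A1 A2 (strict_convex_convex h Hhconv)). }
  assert (rmono : forall x y, 0 < x -> x <= y -> y < 1 -> r x <= r y).
  { apply (mono_le r dr 0 1 Dr). intros x hx. left. apply drp; auto. }
  assert (rnn : forall z, 0 < z < 1 -> 0 <= r z).
  { intros z hz. destruct (Rle_or_lt 0 (r z)) as [|Hlt]; auto. exfalso.
    destruct (Hreg (- r z) ltac:(lra)) as [alp [Halp H']].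
    set (y := Rmin (alp / 2) (z / 2)).
    assert (y1 : y <= alp / 2) by apply Rmin_l.
    assert (y2 : y <= z / 2) by apply Rmin_r.
    assert (y0 : 0 < y) by (unfold y; apply Rmin_pos; lra).
    specialize (H' y ltac:(unfold posR; lra) ltac:(lra)
      ltac:(rewrite Rminus_0_r, Rabs_right; lra)).
    rewrite Rminus_0_r in H'. apply Rabs_def2 in H'.
    pose proof (rmono y z y0 ltac:(lra) ltac:(lra)). lra. }
  assert (rpos : forall z, 0 < z < 1 -> 0 < r z).
  { intros z hz. destruct (MVT_cor2 r dr (z / 2) z ltac:(lra)) as [c [Hmv Hc]].
    { intros c Hc. apply Dr. lra. }
    pose proof (drp c ltac:(lra)). pose proof (rnn (z / 2) ltac:(lra)). nra. }
  assert (fpos : forall x, 0 < x -> 0 < f x).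
  { intros x hx. pose proof (Hfb x ltac:(lra)). nra. }
  pose (T := fun x => f (r x) / f x).
  pose (P := fun x => dr x / T x).
  pose (T' := fun x => (df (r x) * dr x * f x - df x * f (r x)) / Rsqr (f x)).
  pose (P' := fun x => (d2r x * T x - T' x * dr x) / Rsqr (T x)).
  assert (Tpos : forall x, 0 < x < 1 -> 0 < T x).
  { intros x hx. unfold T. apply Rdiv_lt_0_compat; [apply fpos, rpos|apply fpos]; lra. }
  assert (Ppos : forall x, 0 < x < 1 -> 0 < P x).
  { intros x hx. unfold P. apply Rdiv_lt_0_compat; [apply drp|apply Tpos]; lra. }
  assert (TfE : forall x, 0 < x < 1 -> T x * f x = f (r x)).
  { intros x hx. unfold T. field. pose proof (fpos x ltac:(lra)). lra. }
  assert (PTE : forall x, 0 < x < 1 -> P x * T x = dr x).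
  { intros x hx. unfold P. field. pose proof (Tpos x hx). lra. }
  assert (Tlow : forall x, 0 < x < 1 -> mu0 * r x <= T x * (mu1 * x)).
  { intros x hx. pose proof (Hfb x ltac:(lra)). pose proof (Hfb (r x) (rnn x hx)).
    pose proof (TfE x hx). pose proof (Tpos x hx). nra. }
  assert (Tup : forall x, 0 < x < 1 -> T x * (mu0 * x) <= mu1 * r x).
  { intros x hx. pose proof (Hfb x ltac:(lra)). pose proof (Hfb (r x) (rnn x hx)).
    pose proof (TfE x hx). pose proof (Tpos x hx). nra. }
  assert (DT : forall x, 0 < x < 1 -> derivable_pt_lim T x (T' x)).
  { intros x hx.
    assert (Hc : derivable_pt_lim (comp f r) x (df (r x) * dr x)).
    { apply derivable_pt_lim_comp; [apply Dr; auto| apply Df; apply rpos; auto]. }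
    pose proof (fpos x ltac:(lra)).
    exact (derivable_pt_lim_div (comp f r) f x _ _ Hc (Df x ltac:(lra)) ltac:(lra)). }
  assert (DP : forall x, 0 < x < 1 -> derivable_pt_lim P x (P' x)).
  { intros x hx. pose proof (Tpos x hx).
    exact (derivable_pt_lim_div dr T x _ _ (Ddr x hx) (DT x hx) ltac:(lra)). }
  assert (T'E : forall x, 0 < x < 1 ->
            T' x = (df (r x) * dr x - df x * T x) / f x).
  { intros x hx. pose proof (fpos x ltac:(lra)). unfold T', T, Rsqr. field. lra. }
  assert (SG : forall x, 0 < x < 1 ->
     (df (r x) * dphi (T x) - df x * dphi (dr x) < 0 ->
      0 < df (r x) * dr x - df x * T x -> d2r x < 0) /\
     (0 < df (r x) * dphi (T x) - df x * dphi (dr x) ->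
      df (r x) * dr x - df x * T x < 0 -> 0 < d2r x)).
  { intros x hx. pose proof (Heq x hx) as E. unfold equilibrium_eq in E. cbv zeta in E.
    pose proof (Tpos x hx). pose proof (drp x hx).
    apply (eq_sign (f x)
      (d2phi (dr x) + d2h (dr x * T x ^ (n - 1)) * T x ^ (2 * (n - 1)))
      (d2r x) (INR (n - 1)) _ _ (d2h (dr x * T x ^ (n - 1))) (dr x)
      (T x ^ (2 * n - 3))); auto.
    - apply fpos; lra.
    - apply Rplus_le_le_0_compat; [apply P2; lra|].
      apply Rmult_le_pos; [apply H2|apply pow_le; lra].
      apply Rmult_lt_0_compat; [lra|apply pow_lt; lra].
    - apply H2. apply Rmult_lt_0_compat; [lra|apply pow_lt; lra].
    - apply pow_lt; lra. }
  assert (SU : forall x, 0 < x < 1 -> eta1 < P x ->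
            d2r x < 0 /\ 0 < df (r x) * dr x - df x * T x).
  { intros x hx HP. pose proof (Tpos x hx). pose proof (drp x hx).
    pose proof (PTE x hx).
    assert (HD : eta1 * T x < dr x) by nra.
    pose proof (Hdfb x ltac:(lra)). pose proof (Hdfb (r x) (rnn x hx)).
    assert (He1 : mu1 <= eta1 * mu0).
    { apply (Rmult_le_compat_r mu0) in He1a; [|lra].
      unfold Rdiv in He1a. rewrite Rmult_assoc, Rinv_l in He1a; lra. }
    assert (t2p : 0 < df (r x) * dr x - df x * T x) by nra.
    split; auto. apply (proj1 (SG x hx)); auto.
    apply (T1U mu0 mu1 t0 dphi _ _ (T x) (dr x) eta1); auto.
    intros Ht. apply Q1; auto.
    replace (dr x / T x) with (P x) by reflexivity. lra. }
  assert (SL : forall x, 0 < x < 1 -> P x < eta0 ->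
            0 < d2r x /\ df (r x) * dr x - df x * T x < 0).
  { intros x hx HP. pose proof (Tpos x hx). pose proof (drp x hx).
    pose proof (PTE x hx).
    assert (HD : dr x < eta0 * T x) by nra.
    pose proof (Hdfb x ltac:(lra)). pose proof (Hdfb (r x) (rnn x hx)).
    assert (He0 : eta0 * mu1 <= mu0).
    { apply (Rmult_le_compat_r mu1) in He0a; [|lra].
      unfold Rdiv in He0a. rewrite Rmult_assoc, Rinv_l in He0a; lra. }
    assert (t2p : df (r x) * dr x - df x * T x < 0) by nra.
    split; auto. apply (proj2 (SG x hx)); auto.
    apply (T1L mu0 mu1 t0 dphi _ _ (T x) (dr x) eta0); auto.
    intros Ht. apply Q0; auto.
    replace (dr x / T x) with (P x) by reflexivity. lra. }
  assert (He1 : mu1 <= eta1 * mu0).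
  { apply (Rmult_le_compat_r mu0) in He1a; [|lra].
    unfold Rdiv in He1a. rewrite Rmult_assoc, Rinv_l in He1a; lra. }
  assert (He0 : eta0 * mu1 <= mu0).
  { apply (Rmult_le_compat_r mu1) in He0a; [|lra].
    unfold Rdiv in He0a. rewrite Rmult_assoc, Rinv_l in He0a; lra. }
  assert (Plow : forall x, 0 < x < 1 -> eta0 <= P x).
  { intros x hx. destruct (Rle_or_lt eta0 (P x)) as [|HPx]; auto. exfalso.
    assert (Htr : forall z, 0 < z <= x -> P z < eta0).
    { intros z hz. refine (trap P P' 0 1 eta0 DP _ z x _ _ _ _); try lra.
      intros w hw Hw. destruct (SL w hw Hw) as [d2p t2n].
      unfold P'. rewrite T'E by auto.
      pose proof (Tpos w hw). pose proof (drp w hw). pose proof (fpos w (proj1 hw)).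
      apply Rdiv_lt_0_compat; [|unfold Rsqr; nra].
      assert ((df (r w) * dr w - df w * T w) / f w < 0).
      { unfold Rdiv. assert (0 < / f w) by (apply Rinv_0_lt_compat; lra). nra. }
      nra. }
    assert (drm : forall c, 0 < c < x -> dr c <= dr x).
    { intros c hc. destruct (MVT_cor2 dr d2r c x ltac:(lra)) as [e [Hmv He]].
      { intros w hw; apply Ddr; lra. }
      pose proof (proj1 (SL e ltac:(lra) (Htr e ltac:(lra)))). nra. }
    assert (rle : r x <= x * dr x).
    { destruct (Rle_or_lt (r x) (x * dr x)) as [|Hlt]; auto. exfalso.
      destruct (Hreg (r x - x * dr x) ltac:(lra)) as [alp [Halp H']].
      set (y := Rmin (alp / 2) (x / 2)).
      assert (y1 : y <= alp / 2) by apply Rmin_l.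
      assert (y2 : y <= x / 2) by apply Rmin_r.
      assert (y0 : 0 < y) by (unfold y; apply Rmin_pos; lra).
      specialize (H' y ltac:(unfold posR; lra) ltac:(lra)
        ltac:(rewrite Rminus_0_r, Rabs_right; lra)).
      rewrite Rminus_0_r in H'. apply Rabs_def2 in H'.
      destruct (MVT_cor2 r dr y x ltac:(lra)) as [c [Hmv Hc]].
      { intros w hw; apply Dr; lra. }
      pose proof (drm c ltac:(lra)). pose proof (drp c ltac:(lra)).
      pose proof (drp x hx).
      assert (dr c * (x - y) <= dr x * (x - y)) by nra.
      assert (dr x * (x - y) <= dr x * x) by nra.
      lra. }
    pose proof (Tup x hx). pose proof (PTE x hx). pose proof (Tpos x hx).
    assert (A1 : T x * mu0 * x <= mu1 * dr x * x) by nra.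
    assert (A2 : T x * mu0 <= mu1 * dr x) by nra.
    assert (A3 : mu0 <= mu1 * P x) by nra.
    nra. }
  assert (Pup : forall x, 0 < x < 1 -> P x <= eta1).
  { intros x hx. destruct (Rle_or_lt (P x) eta1) as [|HPx]; auto. exfalso.
    set (m := (eta1 + P x) / 2).
    assert (e1p : 1 <= eta1) by lra.
    assert (Htr : forall z, 0 < z <= x -> m < P z).
    { intros z hz. assert (- P z < - m); [|lra].
      refine (trap (fun w => - P w) (fun w => - P' w) 0 1 (- m) _ _ z x _ _ _ _); try lra.
      - intros w hw. exact (derivable_pt_lim_opp P w (P' w) (DP w hw)).
      - intros w hw Hw. destruct (SU w hw ltac:(unfold m in Hw; lra)) as [d2n t2p].
        unfold P'. rewrite T'E by auto.
        pose proof (Tpos w hw). pose proof (drp w hw). pose proof (fpos w (proj1 hw)).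
        assert (0 < (df (r w) * dr w - df w * T w) / f w) by (apply Rdiv_lt_0_compat; lra).
        assert (Num : d2r w * T w - (df (r w) * dr w - df w * T w) / f w * dr w < 0) by nra.
        assert (0 < - (d2r w * T w - (df (r w) * dr w - df w * T w) / f w * dr w) / (T w)²).
        { apply Rdiv_lt_0_compat; [lra|unfold Rsqr; nra]. }
        replace (- ((d2r w * T w - (df (r w) * dr w - df w * T w) / f w * dr w) / (T w)²))
          with (- (d2r w * T w - (df (r w) * dr w - df w * T w) / f w * dr w) / (T w)²)
          by (field; unfold Rsqr; nra).
        lra.
      - unfold m. lra. }
    assert (mp : eta1 < m) by (unfold m; lra).
    set (K := mu0 * (1 - eta1 / m) / mu1).
    assert (Kp : 0 < K).
    { unfold K. apply Rdiv_lt_0_compat; [|lra]. apply Rmult_lt_0_compat; [lra|].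
      assert (eta1 / m < 1); [|lra].
      apply (Rmult_lt_reg_r m); [lra|]. replace (eta1 / m * m) with eta1 by (field; lra). lra. }
    assert (Pd : forall z, 0 < z <= x -> P' z <= - K * P z ^ 2 / z).
    { intros z hz. assert (hz' : 0 < z < 1) by lra.
      pose proof (Htr z hz) as Hm.
      destruct (SU z hz' ltac:(lra)) as [d2n t2p].
      unfold P'. rewrite T'E by auto.
      pose proof (Tpos z hz'). pose proof (PTE z hz'). pose proof (Hfb z ltac:(lra)).
      pose proof (Hdfb z ltac:(lra)). pose proof (Hdfb (r z) (rnn z hz')).
      apply (blow_ineq (T z) (dr z) (d2r z) (f z) _ (P z) K mu1 z); auto; try lra.
      - apply fpos; lra.
      - assert (Q : eta1 <= eta1 / m * P z).
        { replace (eta1 / m * P z) with (eta1 * (P z / m)) by (field; lra).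
          assert (1 <= P z / m); [|nra].
          apply (Rmult_le_reg_r m); [lra|]. replace (P z / m * m) with (P z) by (field; lra). lra. }
        replace (T z * K * mu1 * P z) with (T z * (mu0 * P z - mu0 * (eta1 / m * P z)))
          by (unfold K; field; lra).
        assert (B : mu0 * P z - mu0 * (eta1 / m * P z) <= df (r z) * P z - df z) by nra.
        replace (df (r z) * dr z - df z * T z) with (T z * (df (r z) * P z - df z)) by nra.
        nra. }
    set (w := x * exp (- (1 / P x + 1) / K)).
    assert (Ex : exp (- (1 / P x + 1) / K) < 1).
    { assert (0 < 1 / P x) by (apply Rdiv_lt_0_compat; [lra|apply Ppos; auto]).
      assert (0 < (1 / P x + 1) / K) by (apply Rdiv_lt_0_compat; lra).
      assert (Hl : - (1 / P x + 1) / K < 0).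
      { replace (- (1 / P x + 1) / K) with (- ((1 / P x + 1) / K)) by (field; lra). lra. }
      pose proof (exp_increasing _ _ Hl) as He. rewrite exp_0 in He. exact He. }
    assert (w0 : 0 < w) by (unfold w; pose proof (exp_pos (- (1 / P x + 1) / K)); nra).
    assert (wx : w < x) by (unfold w; nra).
    set (G := fun z => 1 / P z - K * ln z).
    set (G' := fun z => (0 * P z - P' z * fct_cte 1 z) / Rsqr (P z) - K * / z).
    destruct (MVT_cor2 G G' w x wx) as [c [Hmv Hc]].
    { intros c Hc. unfold G, G'.
      assert (hc' : 0 < c < 1) by lra.
      pose proof (Ppos c hc').
      exact (derivable_pt_lim_minus _ _ c _ _
        (derivable_pt_lim_div (fct_cte 1) P c _ _ (derivable_pt_lim_const 1 c) (DP c hc') ltac:(lra))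
        (derivable_pt_lim_scal ln K c _ (derivable_pt_lim_ln c ltac:(lra)))). }
    assert (G'p : 0 <= G' c).
    { unfold G', fct_cte. pose proof (Ppos c ltac:(lra)). pose proof (Pd c ltac:(lra)).
      assert (Pc0 : P c <> 0) by lra.
      assert (c0' : c <> 0) by lra.
      assert (Hq : 0 <= (- P' c - K * P c ^ 2 / c) / (P c * P c)).
      { unfold Rdiv; apply Rmult_le_pos; [lra| left; apply Rinv_0_lt_compat; nra]. }
      unfold Rsqr.
      replace ((0 * P c - P' c * 1) / (P c * P c) - K * / c)
        with ((- P' c - K * P c ^ 2 / c) / (P c * P c)); [exact Hq|].
      field. auto. }
    assert (GwGx : G w <= G x) by nra.
    unfold G in GwGx.
    assert (Lw : ln w = ln x + - (1 / P x + 1) / K).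
    { unfold w. rewrite ln_mult, ln_exp; [ring|lra|apply exp_pos]. }
    rewrite Lw in GwGx.
    assert (0 < 1 / P w) by (apply Rdiv_lt_0_compat; [lra|apply Ppos; lra]).
    assert (E2 : K * (ln x + - (1 / P x + 1) / K) = K * ln x - (1 / P x + 1)) by (field; lra).
    lra. }
  intros rho Hrho.
  assert (rc : cont_within (fun y => 0 < y <= 1) r 1).
  { apply (dw_cont _ r dr). apply Hr1; lra. }
  assert (RP : forall c, Rpower rho (- c) * Rpower rho c = 1).
  { intros c. rewrite <- Rpower_plus. replace (- c + c) with 0 by ring. apply Rpower_O. lra. }
  assert (Rpp : forall c, 0 < Rpower rho c) by (intros; unfold Rpower; apply exp_pos).
  split.
  - pose proof (pow_mono (fun z => - r z) (fun z => - dr z) c1) as PM.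
    assert (PM2 : - r rho * Rpower rho (- c1) <= - r 1).
    { apply PM; auto.
      - intros z hz. exact (derivable_pt_lim_opp r z (dr z) (Dr z hz)).
      - intros z hz. pose proof (Pup z hz). pose proof (PTE z hz). pose proof (Tpos z hz).
        pose proof (Tup z hz). pose proof (rpos z hz).
        assert (A0 : 0 <= (eta1 - P z) * (T z * (mu0 * z))).
        { apply Rmult_le_pos; [lra|]. apply Rmult_le_pos; [lra|]. nra. }
        assert (A1 : mu0 * (z * dr z) <= eta1 * (T z * (mu0 * z))).
        { rewrite <- (PTE z hz). nra. }
        assert (A2 : mu0 * (z * dr z) <= eta1 * mu1 * r z) by nra.
        assert (A3 : z * dr z <= c1 * r z).
        { apply (Rmult_le_reg_l mu0); auto. unfold c1.
          replace (mu0 * (eta1 * mu1 / mu0 * r z)) with (eta1 * mu1 * r z) by (field; lra). lra. }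
        lra.
      - intros eps Heps. destruct (rc eps Heps) as [d [Hd Hd']]. exists d; split; auto.
        intros y Dy Hy. replace (- r y - - r 1) with (- (r y - r 1)) by ring.
        rewrite Rabs_Ropp. auto. }
    rewrite Hrl in PM2. pose proof (RP c1). pose proof (Rpp c1). pose proof (Rpp (- c1)).
    assert (HF : lambda * Rpower rho c1 <= r rho * Rpower rho (- c1) * Rpower rho c1) by nra.
    replace (r rho * Rpower rho (- c1) * Rpower rho c1) with (r rho) in HF
      by (rewrite Rmult_assoc, (RP c1); ring).
    lra.
  - pose proof (pow_mono r dr c0) as PM.
    assert (PM2 : r rho * Rpower rho (- c0) <= r 1).
    { apply PM; auto.
      intros z hz. pose proof (Plow z hz). pose proof (PTE z hz). pose proof (Tpos z hz).
      pose proof (Tlow z hz). pose proof (rpos z hz).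
      assert (A0 : 0 <= (P z - eta0) * (T z * (mu1 * z))).
      { apply Rmult_le_pos; [lra|]. apply Rmult_le_pos; [lra|]. nra. }
      assert (A1 : eta0 * (T z * (mu1 * z)) <= mu1 * (z * dr z)).
      { rewrite <- (PTE z hz). nra. }
      assert (A2 : eta0 * mu0 * r z <= mu1 * (z * dr z)) by nra.
      apply (Rmult_le_reg_l mu1); auto. unfold c0.
      replace (mu1 * (eta0 * mu0 / mu1 * r z)) with (eta0 * mu0 * r z) by (field; lra). lra. }
    rewrite Hrl in PM2. pose proof (RP c0). pose proof (Rpp c0). pose proof (Rpp (- c0)).
    assert (HF : r rho * Rpower rho (- c0) * Rpower rho c0 <= lambda * Rpower rho c0) by nra.
    replace (r rho * Rpower rho (- c0) * Rpower rho c0) with (r rho) in HF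
      by (rewrite Rmult_assoc, (RP c0); ring).
    lra.
Qed.
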